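(* Let $\mathcal H$ be a finite-dimensional Hilbert space, let $P$ be an orthogonal projection on $\mathcal H$, and let $\mathcal E$ be a channel on $\mathcal L(\mathcal H)$ with operation elements $\{E_a\}$, i.e. $\mathcal E(\rho)=\sum_a E_a\rho E_a^\dagger$ with $\sum_a E_a^\dagger E_a={\bf 1}$. Let $\mathcal A$ be a subalgebra of $\mathcal L(P\mathcal H)$ closed under Hermitian conjugation, where operators on $P\mathcal H$ are regarded as operators $X$ on $\mathcal H$ with $X=PXP$ ($\mathcal A$ need not contain $P$). Then $\mathcal A$ is conserved by $\mathcal E$ for states in $P\mathcal H$, i.e. $$P\,\mathcal E^\dagger(X)\,P = PXP \quad\text{for all } X\in\mathcal A,$$ if and only if $[E_aP, X]=E_aPX-XE_aP=0$ for all operation elements $E_a$ and all $X\in\mathcal A$.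
   Context: $\mathcal L(\mathcal K)$ denotes the set of all linear operators on a Hilbert space $\mathcal K$. A channel is a completely positive trace-preserving linear map on $\mathcal L(\mathcal H)$; its dual (Heisenberg-picture) map is the unital completely positive map $\mathcal E^\dagger(X)=\sum_a E_a^\dagger X E_a$, characterized by $\mathrm{Tr}(\rho\,\mathcal E^\dagger(X))=\mathrm{Tr}(\mathcal E(\rho)X)$. *)

(* Defs.v *)
From HB Require Import structures.
From mathcomp Require Import all_boot all_order all_algebra.
From mathcomp Require Import sesquilinear.
Set Implicit Arguments. Unset Strict Implicit. Unset Printing Implicit Defensive.
Import Order.TTheory GRing.Theory Num.Theory.
Local Open Scope ring_scope.
Local Open Scope sesquilinear_scope.

(* The Hilbert space H is C^n, C an algebraically closed numeric field
   (e.g. the complex numbers); operators on H are n x n matrices, and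
   M ^t* is the Hermitian adjoint (conjugate transpose). *)

Definition orth_proj (C : numClosedFieldType) (n : nat) (P : 'M[C]_n) : Prop :=
  P *m P = P /\ P ^t* = P.

Definition kraus_channel (C : numClosedFieldType) (n m : nat)
  (E : 'I_m -> 'M[C]_n) : Prop :=
  \sum_(a < m) (E a) ^t* *m E a = 1%:M.

Definition channel_apply (C : numClosedFieldType) (n m : nat)
  (E : 'I_m -> 'M[C]_n) (rho : 'M[C]_n) : 'M[C]_n :=
  \sum_(a < m) E a *m rho *m (E a) ^t*.

Definition channel_dual (C : numClosedFieldType) (n m : nat)
  (E : 'I_m -> 'M[C]_n) (X : 'M[C]_n) : 'M[C]_n :=
  \sum_(a < m) (E a) ^t* *m X *m E a.

Definition star_subalgebra (C : numClosedFieldType) (n : nat)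
  (A : 'M[C]_n -> Prop) : Prop :=
  [/\ A 0,
      (forall X Y, A X -> A Y -> A (X + Y)),
      (forall (c : C) X, A X -> A (c *: X)),
      (forall X Y, A X -> A Y -> A (X *m Y)) &
      (forall X, A X -> A (X ^t*))].

Definition supported_on (C : numClosedFieldType) (n : nat)
  (P : 'M[C]_n) (A : 'M[C]_n -> Prop) : Prop :=
  forall X, A X -> X = P *m X *m P.

(* Main.v *)
Require Import Defs.
From HB Require Import structures.
From mathcomp Require Import all_boot all_order all_algebra.
From mathcomp Require Import sesquilinear.
Import Order.TTheory GRing.Theory Num.Theory.
Local Open Scope ring_scope.
Local Open Scope sesquilinear_scope.

Section S.
Variables (C : numClosedFieldType) (n : nat).
Implicit Types X Y Z : 'M[C]_n.

Lemma adjM X Y : (X *m Y) ^t* = Y ^t* *m X ^t*.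
Proof. by rewrite trmx_mul map_mxM. Qed.
Lemma adjB X Y : (X - Y) ^t* = X ^t* - Y ^t*.
Proof. by rewrite linearB /= map_mxB. Qed.
Lemma adjK X : (X ^t*) ^t* = X.
Proof. by apply/matrixP=> i j; rewrite !mxE conjCK. Qed.

Lemma expand X Y : (Y *m X - X *m Y)^t* *m (Y *m X - X *m Y) =
  X^t* *m (Y^t* *m 1%:M *m Y) *m X - X^t* *m (Y^t* *m X *m Y)
  - (Y^t* *m X^t* *m Y) *m X + Y^t* *m (X^t* *m X) *m Y.
Proof.
rewrite adjB !adjM !mulmxBl !mulmxBr !mulmxA mulmx1.
by rewrite opprD opprK addrA.
Qed.

Lemma psd0 (m : nat) (M : 'I_m -> 'M[C]_n) :
  \sum_(a < m) (M a)^t* *m M a = 0 -> forall a, M a = 0.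
Proof.
move=> H a; apply/matrixP=> i j; rewrite mxE.
have /matrixP /(_ j j) := H; rewrite summxE mxE.
under eq_bigr => b _ do rewrite mxE.
move=> H2.
have H3 := psumr_eq0P _ H2.
have : \sum_i ((M a)^t* j i * M a i j) = 0.
  apply: H3 => // b _; apply: sumr_ge0 => k _.
  by rewrite !mxE -normCKC exprn_ge0.
move/psumr_eq0P => H4.
have := H4 (fun k _ => ltac:(by rewrite !mxE -normCKC exprn_ge0)) i isT.
rewrite !mxE -normCKC.
by move/eqP; rewrite expf_eq0 /= normr_eq0 => /eqP.
Qed.
End S.
Theorem theorem1 (C : numClosedFieldType) (n m : nat)
  (P : 'M[C]_n) (E : 'I_m -> 'M[C]_n) (A : 'M[C]_n -> Prop) :
  orth_proj P ->
  kraus_channel E ->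
  star_subalgebra A ->
  supported_on P A ->
  (forall X, A X -> P *m channel_dual E X *m P = P *m X *m P) <->
  (forall (a : 'I_m) X, A X -> E a *m P *m X - X *m (E a *m P) = 0).
Proof.
move=> [PP Ph] HK [A0 AD AZ AM Aadj] Hsup.
set D := fun Z : 'M[C]_n => \sum_(a < m) (E a *m P)^t* *m Z *m (E a *m P).
have DE Z : D Z = P *m channel_dual E Z *m P.
  rewrite /D /channel_dual mulmx_sumr mulmx_suml; apply: eq_bigr => a _.
  by rewrite adjM Ph !mulmxA.
have D1 : D 1%:M = P.
  by rewrite DE /channel_dual; under eq_bigr => a _ do rewrite mulmx1;
     rewrite HK mulmx1 PP.
have PX X : A X -> P *m X = X.
  by move=> /Hsup ->; rewrite !mulmxA PP.
have XP X : A X -> X *m P = X.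
  by move=> /Hsup ->; rewrite -!mulmxA PP.
split.
- move=> H a X AX.
  have HD Z : A Z -> D Z = Z by move=> AZ'; rewrite DE H // -Hsup.
  have Hs : \sum_(b < m) (E b *m P *m X - X *m (E b *m P))^t*
               *m (E b *m P *m X - X *m (E b *m P)) = 0.
    under eq_bigr => b _ do rewrite expand.
    rewrite big_split /= !sumrB.
    have -> : \sum_(i < m) X ^t* *m ((E i *m P) ^t* *m 1%:M *m (E i *m P)) *m X
      = X^t* *m D 1%:M *m X by rewrite /D mulmx_sumr mulmx_suml.
    have -> : \sum_(i < m) X ^t* *m ((E i *m P) ^t* *m X *m (E i *m P))
      = X^t* *m D X by rewrite /D mulmx_sumr.
    have -> : \sum_(i < m) (E i *m P) ^t* *m X ^t* *m (E i *m P) *m X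
      = D (X^t*) *m X by rewrite /D mulmx_suml.
    rewrite -/(D _) D1 (HD _ AX) (HD _ (Aadj _ AX)) (HD _ (AM _ _ (Aadj _ AX) AX)) -mulmxA PX //.
    by rewrite subrr sub0r addNr.
  exact: (@psd0 _ _ _ (fun b => E b *m P *m X - X *m (E b *m P)) Hs a).
- move=> H X AX.
  rewrite -DE /D.
  have e a : (E a *m P)^t* *m X *m (E a *m P) = (E a *m P)^t* *m 1%:M *m (E a *m P) *m X.
    have c : E a *m P *m X = X *m (E a *m P) by apply/eqP; rewrite -subr_eq0 H.
    by rewrite mulmx1 -mulmxA -c mulmxA.
  under eq_bigr => a _ do rewrite e.
  by rewrite -mulmx_suml -/(D _) D1 PX // XP.
Qed.
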